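(* Let $\Sigma$ be a signed graph whose underlying graph is cubic and has girth at least $4$. Then $l(\Sigma) \leq \frac{3}{8}|V(\Sigma)|$.
   Context: A signed graph $\Sigma = (G,\sigma)$ consists of a finite graph $G$ and a sign function $\sigma: E(G) \to \{+1,-1\}$. A circle is a connected nonempty $2$-regular subgraph (loops count as circles of length $1$ and pairs of parallel edges as circles of length $2$, so girth at least $4$ means $G$ has no loops, no multiple edges and no triangles). A circle is positive if the product of the signs of its edges is $+1$ and negative otherwise; $\Sigma$ is balanced if all its circles are positive. The frustration index $l(\Sigma)$ is the smallest number of edges whose deletion from $\Sigma$ leaves a balanced signed graph. Cubic means every vertex has degree exactly $3$. *)

(* Defs.v *)
From mathcomp Require Import all_boot all_order all_algebra.
Set Implicit Arguments. Unset Strict Implicit. Unset Printing Implicit Defensive.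
Import GRing.Theory Num.Theory.

Definition simple_graph (V : finType) (adj : rel V) : Prop :=
  symmetric adj /\ irreflexive adj.

Definition edges (V : finType) (adj : rel V) : {set {set V}} :=
  [set A : {set V} | [exists u, exists v, adj u v && (A == [set u; v])]].

Definition cubic (V : finType) (adj : rel V) : Prop :=
  forall v : V, #|[set u | adj v u]| = 3.

Definition degC (V : finType) (C : {set {set V}}) (v : V) : nat :=
  #|[set A in C | v \in A]|.

(* A circle: a nonempty, connected, 2-regular subgraph, given by its edge set
   C (vertices = those covered by C).  Connectedness is expressed via
   connectivity of edges sharing a vertex. *)
Definition circle (V : finType) (adj : rel V) (C : {set {set V}}) : bool :=
  [&& C \subset edges adj, C != set0,
      [forall v : V, (degC C v == 0) || (degC C v == 2)] &
      [forall A in C, forall B in C,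
        connect [rel X Y | [&& X \in C, Y \in C & X :&: Y != set0]] A B]].

Definition girth_ge4 (V : finType) (adj : rel V) : Prop :=
  forall C, circle adj C -> 4 <= #|C|.

Definition sign_fun (V : finType) (adj : rel V) (sigma : {set V} -> int) : Prop :=
  forall A, A \in edges adj -> sigma A = 1%R \/ sigma A = (-1)%R.

Definition positive_circle (V : finType) (sigma : {set V} -> int)
  (C : {set {set V}}) : bool :=
  (\prod_(A in C) sigma A == 1)%R.

Definition balanced_after_deletion (V : finType) (adj : rel V)
  (sigma : {set V} -> int) (D : {set {set V}}) : bool :=
  [forall C : {set {set V}},
     (circle adj C && [disjoint C & D]) ==> positive_circle sigma C].

Definition frustration_index (V : finType) (adj : rel V)
  (sigma : {set V} -> int) : nat :=
  \big[minn/#|edges adj|]_(D : {set {set V}} |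
      (D \subset edges adj) &&
      balanced_after_deletion adj sigma D) #|D|.

(* Main.v *)
Require Import Defs.
From mathcomp Require Import all_boot all_order all_algebra zify.
Set Implicit Arguments. Unset Strict Implicit. Unset Printing Implicit Defensive.
Import GRing.Theory Num.Theory.
Import Order.TTheory.

Lemma card_sum (T : finType) (b : pred T) : #|[set y | b y]| = \sum_y (b y : nat).
Proof. rewrite -sum1_card big_mkcond /=; apply: eq_bigr => y _; rewrite inE; by case: (b y). Qed.

Lemma sum_ge1 (T : finType) (b : pred T) y : b y -> 1 <= \sum_x (b x : nat).
Proof. by move=> Hb; rewrite (bigD1 y) //= Hb. Qed.

Lemma sum_ge2 (T : finType) (b : pred T) y1 y2 : b y1 -> b y2 -> y1 != y2 ->
  2 <= \sum_x (b x : nat).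
Proof.
move=> H1 H2 ne; rewrite (bigD1 y1) //= (bigD1 y2) /=; first by rewrite H1 H2.
by rewrite eq_sym ne.
Qed.

Lemma sum_pos (T : finType) (b : pred T) : 0 < \sum_x (b x : nat) -> exists y, b y.
Proof.
case: (boolP [exists y, b y]) => [/existsP //|/existsPn H].
by rewrite big1 // => y _; rewrite (negbTE (H y)).
Qed.

Lemma sum_eq1 (T : finType) (P : pred T) e : \sum_x ((x == e) && P x : nat) = P e.
Proof. by rewrite (bigD1 e) //= eqxx big1 ?addn0 // => A /negbTE ->. Qed.

Lemma sum_in_S (T : finType) (S : {set T}) (F : T -> T -> bool) :
  \sum_x \sum_y ((x \in S) && F x y : nat) = \sum_(x in S) \sum_y (F x y : nat).
Proof.
rewrite [RHS]big_mkcond /=; apply: eq_bigr => x _.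
by case: (x \in S) => //; rewrite big1.
Qed.

Lemma sum3 (T : finType) (F : T -> nat) a b c : a != b -> a != c -> b != c ->
  F a + F b + F c <= \sum_x F x.
Proof.
move=> ab ac bc; rewrite (bigD1 a) //= (bigD1 b) /=; last by rewrite eq_sym ab.
rewrite (bigD1 c) /=; last by rewrite eq_sym ac eq_sym bc.
by rewrite !addnA leq_addr.
Qed.

Lemma triangle_circle (V : finType) (adj : rel V) a b c :
  symmetric adj -> irreflexive adj -> adj a b -> adj b c -> adj a c ->
  circle adj [set [set a; b]; [set b; c]; [set a; c]] /\
  #|[set [set a; b]; [set b; c]; [set a; c]]| <= 3.
Proof.
move=> sym irr Hab Hbc Hac.
have ab : a != b by apply: contraTneq Hab => ->; rewrite irr.
have bc : b != c by apply: contraTneq Hbc => ->; rewrite irr.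
have ac : a != c by apply: contraTneq Hac => ->; rewrite irr.
have ba : b != a by rewrite eq_sym.
have cb : c != b by rewrite eq_sym.
have ca : c != a by rewrite eq_sym.
set e1 := [set a; b]; set e2 := [set b; c]; set e3 := [set a; c].
have memC : forall A, (A \in [set e1; e2; e3]) = [|| A == e1, A == e2 | A == e3].
  by move=> A; rewrite !inE orbA.
have e12 : e1 != e2.
  apply/eqP => E; have /setP/(_ a) := E; by rewrite !inE !eqxx /= ?orbT ?(negbTE ab, negbTE ac, negbTE bc, negbTE ba, negbTE ca, negbTE cb).
have e13 : e1 != e3.
  apply/eqP => E; have /setP/(_ b) := E; by rewrite !inE !eqxx /= ?orbT ?(negbTE ab, negbTE ac, negbTE bc, negbTE ba, negbTE ca, negbTE cb).
have e23 : e2 != e3.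
  apply/eqP => E; have /setP/(_ b) := E; by rewrite !inE !eqxx /= ?orbT ?(negbTE ab, negbTE ac, negbTE bc, negbTE ba, negbTE ca, negbTE cb).
have e21 : e2 != e1 by rewrite eq_sym.
have e31 : e3 != e1 by rewrite eq_sym.
have e32 : e3 != e2 by rewrite eq_sym.
split; last first.
  rewrite card_sum.
  apply: (@leq_trans (\sum_A ((A == e1) + (A == e2) + (A == e3)))).
    apply: leq_sum => A _; rewrite !inE.
    by case: (A == e1); case: (A == e2); case: (A == e3).
  rewrite !big_split /=.
  have S1 : forall e : {set V}, \sum_(A : {set V}) (A == e : nat) = 1.
    by move=> e; rewrite (bigD1 e) //= eqxx big1 // => A /negbTE ->.
  by rewrite !S1.
apply/and4P; split.
- apply/subsetP => A; rewrite memC => /or3P [] /eqP ->; rewrite inE.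
  + by apply/existsP; exists a; apply/existsP; exists b; rewrite Hab eqxx.
  + by apply/existsP; exists b; apply/existsP; exists c; rewrite Hbc eqxx.
  + by apply/existsP; exists a; apply/existsP; exists c; rewrite Hac eqxx.
- by apply/set0Pn; exists e1; rewrite memC eqxx.
- apply/forallP => v; rewrite /degC card_sum.
  have -> : \sum_A ((A \in [set e1; e2; e3]) && (v \in A) : nat) =
            (v \in e1) + (v \in e2) + (v \in e3).
    rewrite -!(sum_eq1 (fun A : {set V} => v \in A)) -!big_split /=.
    apply: eq_bigr => A _; rewrite memC.
    case: (eqVneq A e1) => [->|n1]; first by rewrite ?(negbTE e12, negbTE e13, negbTE e23, negbTE e21, negbTE e31, negbTE e32) /= !addn0.
    case: (eqVneq A e2) => [->|n2]; first by rewrite ?(negbTE e12, negbTE e13, negbTE e23, negbTE e21, negbTE e31, negbTE e32) /= !addn0.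
    case: (eqVneq A e3) => [->|n3]; first by rewrite ?(negbTE e12, negbTE e13, negbTE e23, negbTE e21, negbTE e31, negbTE e32) /= !addn0.
    by [].
  rewrite /e1 /e2 /e3 !inE.
  case: (eqVneq v a) => [E|va]; first by subst v; rewrite ?eqxx ?(negbTE ab, negbTE ac, negbTE bc, negbTE ba, negbTE ca, negbTE cb).
  case: (eqVneq v b) => [E|vb]; first by subst v; rewrite ?eqxx ?(negbTE ab, negbTE ac, negbTE bc, negbTE ba, negbTE ca, negbTE cb).
  case: (eqVneq v c) => [E|vc]; first by subst v; rewrite ?eqxx ?(negbTE ab, negbTE ac, negbTE bc, negbTE ba, negbTE ca, negbTE cb).
  by [].
- apply/forallP => A; apply/implyP => HA; apply/forallP => B; apply/implyP => HB.
  apply: connect1; rewrite /= HA HB /=.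
  move: HA HB; rewrite !memC => /or3P [] /eqP -> /or3P [] /eqP ->; apply/set0Pn;
  first [ by exists a; rewrite !inE !eqxx ?orbT
        | by exists b; rewrite !inE !eqxx ?orbT
        | by exists c; rewrite !inE !eqxx ?orbT ].
Qed.

Lemma no_triangle (V : finType) (adj : rel V) a b c :
  symmetric adj -> irreflexive adj -> girth_ge4 adj ->
  adj a b -> adj b c -> adj a c -> False.
Proof.
move=> sym irr g Hab Hbc Hac.
have [H1 H2] := triangle_circle sym irr Hab Hbc Hac.
by have := g _ H1; rewrite leqNgt (leq_ltn_trans H2 (ltnSn 3)).
Qed.
Definition nbad (V : finType) (sigma : {set V} -> int) (s : {ffun V -> bool}) (x y : V) : bool :=
  (sigma [set x; y] == (-1)%R) (+) s x (+) s y.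
Definition Phi (V : finType) (adj : rel V) (sigma : {set V} -> int) (s : {ffun V -> bool}) : nat :=
  \sum_x \sum_y (adj x y && nbad sigma s x y : nat).
Definition flip (V : finType) (S : {set V}) (s : {ffun V -> bool}) : {ffun V -> bool} :=
  [ffun x => s x (+) (x \in S)].

Lemma nbad_sym (V : finType) sigma s (x y : V) : nbad sigma s x y = nbad sigma s y x.
Proof. by rewrite /nbad setUC; case: (s x); case: (s y); case: (_ == _). Qed.

Lemma sum_swap (V : finType) (F : V -> V -> nat) :
  \sum_x \sum_y F x y = \sum_x \sum_y F y x.
Proof. by rewrite exchange_big. Qed.

Lemma key (V : finType) (adj : rel V) sigma s (S : {set V}) :
  symmetric adj -> Phi adj sigma s <= Phi adj sigma (flip S s) ->
  \sum_x \sum_y ((x \in S) && [&& y \notin S, adj x y & nbad sigma s x y] : nat) <=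
  \sum_x \sum_y ((x \in S) && [&& y \notin S, adj x y & ~~ nbad sigma s x y] : nat).
Proof.
move=> sym HP.
set Qb := \sum_x \sum_y ((x \in S) && [&& y \notin S, adj x y & nbad sigma s x y] : nat).
set Qg := \sum_x \sum_y ((x \in S) && [&& y \notin S, adj x y & ~~ nbad sigma s x y] : nat).
have E : forall x y,
  (adj x y && nbad sigma (flip S s) x y : nat) +
  (((x \in S) && [&& y \notin S, adj x y & nbad sigma s x y] : nat) +
   ((y \in S) && [&& x \notin S, adj y x & nbad sigma s y x] : nat)) =
  (adj x y && nbad sigma s x y : nat) +
  (((x \in S) && [&& y \notin S, adj x y & ~~ nbad sigma s x y] : nat) +
   ((y \in S) && [&& x \notin S, adj y x & ~~ nbad sigma s y x] : nat)).
  move=> x y; rewrite (sym y x) (nbad_sym _ _ y x) /nbad !ffunE.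
  by case: (x \in S); case: (y \in S); case: (adj x y); case: (s x); case: (s y); case: (_ == _).
have : Phi adj sigma (flip S s) + (Qb + Qb) = Phi adj sigma s + (Qg + Qg).
  have -> : Qb + Qb = Qb + \sum_x \sum_y ((y \in S) && [&& x \notin S, adj y x & nbad sigma s y x] : nat).
    by rewrite {2}/Qb exchange_big.
  have -> : Qg + Qg = Qg + \sum_x \sum_y ((y \in S) && [&& x \notin S, adj y x & ~~ nbad sigma s y x] : nat).
    by rewrite {2}/Qg exchange_big.
  rewrite /Qb /Qg /Phi -!big_split /=; apply: eq_bigr => x _.
  rewrite -!big_split /=; apply: eq_bigr => y _; exact: E.
lia.
Qed.

Lemma bound1 (V : finType) (S : {set V}) (P adjw : pred V) v y1 :
  v \in S -> adjw v -> adjw y1 -> ~~ P y1 -> y1 != v -> \sum_y (adjw y : nat) = 3 ->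
  \sum_y ([&& y \notin S, adjw y & P y] : nat) <= 1.
Proof.
move=> vS av ay1 Py1 y1v d3.
have : \sum_y ([&& y \notin S, adjw y & P y] + (y == v) + (y == y1)) <= 3.
  rewrite -d3; apply: leq_sum => y _.
  case: (eqVneq y v) => [->|yv]; first by rewrite vS /= av eq_sym (negbTE y1v).
  case: (eqVneq y y1) => [->|yy1]; first by rewrite (negbTE Py1) !andbF ay1.
  by rewrite !addn0; case: (y \notin S); case: (adjw y); case: (P y).
have S1 : forall e : V, \sum_(y : V) (y == e : nat) = 1.
  by move=> e; rewrite (bigD1 e) //= eqxx big1 // => A /negbTE ->.
rewrite !big_split /= !S1; lia.
Qed.

Lemma deg3 (V : finType) (adj : rel V) : cubic adj -> forall v, \sum_y (adj v y : nat) = 3.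
Proof. by move=> cub v; rewrite -card_sum; exact: cub. Qed.

Lemma stepA (V : finType) (adj : rel V) sigma s :
  symmetric adj -> irreflexive adj -> cubic adj ->
  (forall f, Phi adj sigma s <= Phi adj sigma f) ->
  forall v, \sum_y (adj v y && nbad sigma s v y : nat) <= 1.
Proof.
move=> sym irr cub Hopt v.
have := @key _ _ sigma s [set v] sym (Hopt _).
rewrite !sum_in_S !big_set1.
have E1 : forall b : pred V, \sum_y ([&& y \notin [set v], adj v y & b y] : nat) =
                          \sum_y (adj v y && b y : nat).
  move=> b; apply: eq_bigr => y _; rewrite inE.
  by case: (eqVneq y v) => [->|]; rewrite ?irr.
rewrite (E1 (nbad sigma s v)) (E1 (fun y => ~~ nbad sigma s v y)).
have : \sum_y (adj v y && nbad sigma s v y : nat) + \sum_y (adj v y && ~~ nbad sigma s v y : nat) = 3.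
  rewrite -big_split /= -(deg3 cub v); apply: eq_bigr => y _.
  by case: (adj v y); case: (nbad sigma s v y).
lia.
Qed.

Lemma stepB (V : finType) (adj : rel V) sigma s :
  symmetric adj -> irreflexive adj -> cubic adj -> girth_ge4 adj ->
  (forall f, Phi adj sigma s <= Phi adj sigma f) ->
  forall v, 0 < \sum_y (adj v y && nbad sigma s v y : nat) ->
  exists w, adj v w && (\sum_y (adj w y && nbad sigma s w y : nat) == 0).
Proof.
move=> sym irr cub g Hopt v Hv.
set nd := fun w => \sum_y (adj w y && nbad sigma s w y : nat).
have Ha := stepA sym irr cub Hopt.
case: (boolP [exists w, adj v w && (nd w == 0)]) => [/existsP //|/existsPn Hn].
exfalso.
have Hn' : forall w, adj v w -> 0 < nd w.
  by move=> w Hw; have := Hn w; rewrite Hw lt0n.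
have [u /andP [Hvu Buv]] := sum_pos Hv.
have N3 : #|[set y | adj v y]| = 3 := cub v.
have : #|[set y | adj v y] :\ u| == 2.
  by rewrite (cardsD1 u) inE Hvu in N3; apply/eqP; lia.
case/cards2P => w1 [w2 [w12 EN]].
have : w1 \in [set y | adj v y] :\ u by rewrite EN set21.
rewrite !inE => /andP [w1u Hvw1].
have : w2 \in [set y | adj v y] :\ u by rewrite EN set22.
rewrite !inE => /andP [w2u Hvw2].
have NV : forall y, adj v y -> [|| y == u, y == w1 | y == w2].
  move=> y Hy; case: (eqVneq y u) => //= yu.
  have : y \in [set y | adj v y] :\ u by rewrite !inE yu Hy.
  by rewrite EN !inE.
have nw12 : ~~ adj w1 w2.
  by apply/negP => H; apply: (no_triangle sym irr g Hvw1 H Hvw2).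
have nw21 : ~~ adj w2 w1 by rewrite sym.
have [y1 /andP [Hw1y1 B1]] := sum_pos (Hn' w1 Hvw1).
have [y2 /andP [Hw2y2 B2]] := sum_pos (Hn' w2 Hvw2).
have uw1 : u != w1 by rewrite eq_sym.
have uw2 : u != w2 by rewrite eq_sym.
have neq : forall a b, adj a b -> a != b.
  by move=> a b Hab; apply: contraTneq Hab => ->; rewrite irr.
have uv : u != v by rewrite eq_sym neq.
have vw1 : v != w1 by rewrite neq.
have vw2 : v != w2 by rewrite neq.
have yv : forall w y, adj v w -> adj w y -> nbad sigma s w y -> w != u -> y != v.
  move=> w y Hvw Hwy Bwy wu; apply/eqP => E; subst y.
  have := Ha v; rewrite leqNgt; move/negP; apply.
  apply: (sum_ge2 (y1:=u) (y2:=w)); first by rewrite Hvu Buv.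
    by rewrite Hvw nbad_sym Bwy.
  by rewrite eq_sym.
have y1v := yv _ _ Hvw1 Hw1y1 B1 w1u.
have y2v := yv _ _ Hvw2 Hw2y2 B2 w2u.
have y1w1 : y1 != w1 by rewrite eq_sym neq.
have y2w2 : y2 != w2 by rewrite eq_sym neq.
have y1w2 : y1 != w2 by apply: contraNneq nw12 => <-.
have y2w1 : y2 != w1 by apply: contraNneq nw21 => <-.
set S := [set v; w1; w2].
have vS : v \in S by rewrite !inE eqxx.
have w1S : w1 \in S by rewrite !inE eqxx ?orbT.
have w2S : w2 \in S by rewrite !inE eqxx ?orbT.
have uS : u \notin S by rewrite !inE !negb_or uv uw1 uw2.
have y1S : y1 \notin S by rewrite !inE !negb_or y1v y1w1 y1w2.
have y2S : y2 \notin S by rewrite !inE !negb_or y2v y2w1 y2w2.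
have K := @key _ _ sigma s S sym (Hopt _).
pose F := fun x => \sum_y ((x \in S) && [&& y \notin S, adj x y & nbad sigma s x y] : nat).
have L : 3 <= \sum_x F x.
  apply: leq_trans (sum3 F vw1 vw2 w12).
  have G1 : forall x y, x \in S -> y \notin S -> adj x y -> nbad sigma s x y -> 1 <= F x.
    by move=> x y xS yS Hxy Bxy; apply: (sum_ge1 (y:=y)); rewrite xS yS Hxy Bxy.
  rewrite -[3]/(1+1+1); apply: leq_add; [apply: leq_add|].
  - exact: (G1 _ _ vS uS Hvu Buv).
  - exact: (G1 _ _ w1S y1S Hw1y1 B1).
  - exact: (G1 _ _ w2S y2S Hw2y2 B2).
have U : \sum_x \sum_y ((x \in S) && [&& y \notin S, adj x y & ~~ nbad sigma s x y] : nat) <= 2.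
  have S1 : forall e : V, \sum_(y : V) (y == e : nat) = 1.
    by move=> e; rewrite (bigD1 e) //= eqxx big1 // => A /negbTE ->.
  apply: (@leq_trans (\sum_x ((x == w1) + (x == w2)))); last by rewrite big_split /= !S1.
  apply: leq_sum => x _.
  case: (eqVneq x v) => [->|xv].
    rewrite big1 // => y _; rewrite vS /=.
    case: (boolP (adj v y)) => Hy; last by rewrite andbF.
    have := NV y Hy; case/or3P => /eqP ->; by rewrite ?Buv ?andbF ?w1S ?w2S.
  case: (eqVneq x w1) => [->|xw1].
    rewrite w1S /= (negbTE w12) addn0.
    apply: (bound1 (v:=v) (y1:=y1)) => //; [by rewrite sym|by rewrite B1|exact: deg3].
  case: (eqVneq x w2) => [->|xw2].
    rewrite w2S /=.
    apply: (bound1 (v:=v) (y1:=y2)) => //; [by rewrite sym|by rewrite B2|exact: deg3].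
  have -> : x \in S = false by rewrite !inE (negbTE xv) (negbTE xw1) (negbTE xw2).
  by rewrite big1.
have := leq_trans L (leq_trans K U); by [].
Qed.

Lemma stepC (V : finType) (adj : rel V) (nd : V -> nat) :
  symmetric adj -> (forall v, \sum_y (adj v y : nat) = 3) ->
  (forall v, nd v <= 1) ->
  (forall v, 0 < nd v -> exists w, adj v w && (nd w == 0)) ->
  4 * \sum_v nd v <= 3 * #|V|.
Proof.
move=> sym deg Ha Hb.
pose B := fun v => 0 < nd v.
have E : \sum_v nd v = \sum_v (B v : nat).
  by apply: eq_bigr => v _; rewrite /B; move: (Ha v); case: (nd v) => [|[]].
have L1 : \sum_v (B v : nat) <= \sum_v \sum_w ([&& B v, ~~ B w & adj v w] : nat).
  apply: leq_sum => v _; case: (boolP (B v)) => Bv //.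
  have [w /andP [Hvw /eqP nw]] := Hb v Bv.
  rewrite /=; apply: (@sum_ge1 _ _ w); by rewrite /= Hvw /B nw.
have L2 : \sum_v \sum_w ([&& B v, ~~ B w & adj v w] : nat) <= \sum_w (~~ B w : nat) * 3.
  rewrite exchange_big /=; apply: leq_sum => w _.
  rewrite -(deg w) big_distrr /=; apply: leq_sum => v _.
  by rewrite (sym v w); case: (B v); case: (B w); case: (adj w v).
have L3 : \sum_v (B v : nat) + \sum_v (~~ B v : nat) = #|V|.
  rewrite -big_split /= -sum1_card; apply: eq_bigr => v _; by case: (B v).
rewrite -big_distrl /= in L2.
have := leq_trans L1 L2; rewrite E; set a := \sum_v (B v : nat); set b := \sum_v (~~ B v : nat).
move: L3; rewrite -/a -/b.
lia.
Qed.

Definition Dset (V : finType) (adj : rel V) sigma s : {set {set V}} :=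
  [set A : {set V} | [exists x, exists y, [&& adj x y, nbad sigma s x y & A == [set x; y]]]].

Lemma Dsub (V : finType) (adj : rel V) sigma s : Dset adj sigma s \subset edges adj.
Proof.
apply/subsetP => A; rewrite !inE => /existsP [x /existsP [y /and3P [H _ E]]].
by apply/existsP; exists x; apply/existsP; exists y; rewrite H E.
Qed.

Lemma Dcard (V : finType) (adj : rel V) sigma s :
  symmetric adj -> irreflexive adj ->
  2 * #|Dset adj sigma s| <= \sum_v \sum_y (adj v y && nbad sigma s v y : nat).
Proof.
move=> sym irr; set D := Dset adj sigma s.
have E2 : \sum_(A in D) #|A| = #|D| * 2.
  rewrite -sum_nat_const; apply: eq_bigr => A.
  rewrite inE => /existsP [x /existsP [y /and3P [Hxy _ /eqP ->]]].
  rewrite cards2; suff -> : x != y by [].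
  by apply: contraTneq Hxy => ->; rewrite irr.
have E3 : \sum_(A in D) #|A| = \sum_v \sum_(A in D) (v \in A : nat).
  rewrite exchange_big /=; apply: eq_bigr => A _.
  by rewrite -sum1_card big_mkcond /=; apply: eq_bigr => v _; case: (v \in A).
rewrite mulnC -E2 E3; apply: leq_sum => v _.
apply: (@leq_trans (\sum_(A in D) \sum_y ([&& adj v y, nbad sigma s v y & A == [set v; y]] : nat))).
  apply: leq_sum => A HA; case: (boolP (v \in A)) => vA //.
  move: HA; rewrite inE => /existsP [x /existsP [y /and3P [Hxy Bxy /eqP EA]]].
  move: vA; rewrite EA !inE; case/orP => /eqP ->.
    by apply: (@sum_ge1 _ _ y); rewrite /= Hxy Bxy eqxx.
  apply: (@sum_ge1 _ _ x); by rewrite /= sym Hxy nbad_sym Bxy setUC eqxx.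
rewrite exchange_big /=; apply: leq_sum => y _.
case: (boolP (adj v y)) => Hy /=; last by rewrite big1.
case: (boolP (nbad sigma s v y)) => By /=; last by rewrite big1.
apply: (@leq_trans (\sum_A (A == [set v; y] : nat))).
  by rewrite [X in X <= _]big_mkcond; apply: leq_sum => A _; case: (A \in D).
by rewrite (bigD1 [set v; y]) //= eqxx big1 // => A /negbTE ->.
Qed.

Lemma Dbal (V : finType) (adj : rel V) sigma s :
  irreflexive adj -> sign_fun adj sigma ->
  balanced_after_deletion adj sigma (Dset adj sigma s).
Proof.
move=> irr sgn; set D := Dset adj sigma s.
apply/forallP => C; apply/implyP => /andP [circ disj].
move: circ => /and4P [sub _ /forallP degs _].
rewrite /positive_circle.
pose t := fun v => if s v then (-1 : int)%R else 1%R.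
have HA : forall A, A \in C -> sigma A = (\prod_(v in A) t v)%R.
  move=> A AC; have AE : A \in edges adj := subsetP sub A AC.
  have AnD : (A \in D) = false := disjointFr disj AC.
  move: (AE); rewrite inE => /existsP [x /existsP [y /andP [Hxy /eqP EA]]].
  have nb : ~~ nbad sigma s x y.
    apply: contraFN AnD => H; rewrite inE; apply/existsP; exists x; apply/existsP; exists y.
    by rewrite Hxy H EA eqxx.
  have xy : x != y by apply: contraTneq Hxy => ->; rewrite irr.
  rewrite EA big_setU1 ?inE // big_set1.
  have := sgn A AE; rewrite EA; move: nb; rewrite /nbad /t.
  move=> nb'; case=> E; rewrite E in nb' *; move: nb'; by case: (s x); case: (s y).
rewrite (eq_bigr _ HA).
have -> : (\prod_(A in C) \prod_(v in A) t v = \prod_v \prod_(A in C) (if v \in A then t v else 1))%R.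
  rewrite exchange_big /=; apply: eq_bigr => A _; by rewrite big_mkcond.
rewrite big1 // => v _.
rewrite -big_mkcondr.
have -> : (\prod_(A | (A \in C) && (v \in A)) t v = t v ^+ degC C v)%R.
  by rewrite /degC -prodr_const; apply: eq_bigl => A; rewrite inE.
by case/orP: (degs v) => /eqP ->; rewrite /t; case: (s v).
Qed.

Theorem theorem3 (V : finType) (adj : rel V) (sigma : {set V} -> int) :
  simple_graph adj -> cubic adj -> girth_ge4 adj -> sign_fun adj sigma ->
  8 * frustration_index adj sigma <= 3 * #|V|.
Proof.
move=> [sym irr] cub g sgn.
pose s := [arg min_(f < ([ffun=> false] : {ffun V -> bool})) Phi adj sigma f].
have Hopt : forall f, Phi adj sigma s <= Phi adj sigma f.
  by rewrite /s; case: arg_minnP => // f _ H g'; apply: H.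
have Ha := stepA sym irr cub Hopt.
have Hb := stepB sym irr cub g Hopt.
have Hc := stepC sym (deg3 cub) Ha Hb.
have Hd := Dcard sigma s sym irr.
have Hf : frustration_index adj sigma <= #|Dset adj sigma s|.
  rewrite /frustration_index -minEnat. apply: (@bigmin_le_cond _ _ _ #|edges adj| (Dset adj sigma s)).
  by rewrite Dsub Dbal.
move: Hc Hd Hf.
set a := \sum_v _; set b := #|Dset _ _ _|; set c := frustration_index _ _.
lia.
Qed.
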